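(* Let $\rho=\frac12(I+x\sigma_1+y\sigma_2+z\sigma_3)$ with $r:=\sqrt{x^2+y^2+z^2}\in(0,1)$, let $A\in M_2(\mathbb C)$ be self-adjoint and $f\in\mathcal F^{\,r}_{op}$. Then $$I^{SLD}_\rho(A)=\frac{r^2}{1-m_{\tilde f}(1-r,1+r)}\,I^f_\rho(A).$$
   Context: $\sigma_1,\sigma_2,\sigma_3$ are the Pauli matrices. $\mathcal F_{op}$ is the class of functions $f:(0,\infty)\to(0,\infty)$ that are operator monotone, satisfy $f(1)=1$ and $tf(t^{-1})=f(t)$ for all $t>0$. $f(0):=\lim_{x\to0^+}f(x)$, and $\mathcal F^{\,r}_{op}=\{f\in\mathcal F_{op}: f(0)\neq0\}$. For $f\in\mathcal F^{\,r}_{op}$, $\tilde f(x):=\frac12\big[(x+1)-(x-1)^2\frac{f(0)}{f(x)}\big]$ for $x>0$. For $g\in\mathcal F_{op}$ and $x,y>0$, $m_g(x,y)=xg(y/x)$. $L_\rho(X)=\rho X$, $R_\rho(X)=X\rho$, and $m_f(L_\rho,R_\rho)$ multiplies the entry $X_{ij}$ of $X$ (in an orthonormal eigenbasis of $\rho$ with eigenvalues $\lambda_i$) by $m_f(\lambda_i,\lambda_j)$. $\|X\|^2_{\rho,f}=\mathrm{Tr}\big(X^* m_f(L_\rho,R_\rho)^{-1}(X)\big)$. The $f$-information is $I^f_\rho(A)=\frac{f(0)}{2}\|i[\rho,A]\|^2_{\rho,f}$, and $I^{SLD}_\rho:=I^{f_{SLD}}_\rho$ with $f_{SLD}(x)=\frac{1+x}{2}$.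 *)

(* Defs.v *)
From HB Require Import structures.
From mathcomp Require Import all_boot all_order all_algebra.
From mathcomp Require Import all_classical all_reals all_analysis.
From mathcomp Require Export complex.
Import Order.TTheory GRing.Theory Num.Theory.

Set Implicit Arguments.
Unset Strict Implicit.
Unset Printing Implicit Defensive.

Local Open Scope ring_scope.
Local Open Scope complex_scope.

Section QDefs.
Variable R : realType.
Local Notation C := R[i].

Definition adj m n (M : 'M[C]_(m, n)) : 'M[C]_(n, m) := (map_mx (@conjc R) M)^T.

Definition is_unitary n (U : 'M[C]_n) : Prop := adj U *m U = 1%:M.
Definition is_hermitian n (M : 'M[C]_n) : Prop := adj M = M.

(* positive semidefinite (in the order of C: 0 <= z means z real, z >= 0) *)
Definition is_psd n (M : 'M[C]_n) : Prop :=
  forall v : 'cV[C]_n, 0 <= (adj v *m M *m v) 0 0.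
Definition loewner_le n (A B : 'M[C]_n) : Prop := is_psd (B - A).

Definition rdiag n (d : 'rV[R]_n) : 'M[C]_n := diag_mx (map_mx (@real_complex_def R (Phant R)) d).

(* f(M) for M = U diag(d) U^* (U is_unitary, d real): U diag(f d) U^* *)
Definition fcalc (f : R -> R) n (U : 'M[C]_n) (d : 'rV[R]_n) : 'M[C]_n :=
  U *m rdiag (map_mx f d) *m adj U.

Definition operator_monotone (f : R -> R) : Prop :=
  forall n (U V : 'M[C]_n) (d e : 'rV[R]_n),
    is_unitary U -> is_unitary V ->
    (forall i, 0 < d 0 i) -> (forall i, 0 < e 0 i) ->
    loewner_le (U *m rdiag d *m adj U) (V *m rdiag e *m adj V) ->
    loewner_le (fcalc f U d) (fcalc f V e).

Definition Fop (f : R -> R) : Prop :=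
  [/\ (forall t, 0 < t -> 0 < f t),
      operator_monotone f,
      f 1 = 1 &
      (forall t, 0 < t -> t * f t^-1 = f t)].

(* f~ for f in F^r_op, with f0 = f(0) *)
Definition ftilde (f : R -> R) (f0 : R) (x : R) : R :=
  ((x + 1) - (x - 1) ^+ 2 * (f0 / f x)) / 2.

Definition mmean (g : R -> R) (x y : R) : R := x * g (y / x).

Definition fSLD (x : R) : R := (1 + x) / 2.

Definition sigma1 : 'M[C]_2 := \matrix_(i, j) (if i == j then 0 else 1).
Definition sigma2 : 'M[C]_2 :=
  \matrix_(i, j) (if i == j then 0 else if (i : nat) == 0%N then - 'i else 'i).
Definition sigma3 : 'M[C]_2 :=
  \matrix_(i, j) (if i == j then (if (i : nat) == 0%N then 1 else -1) else 0).

Definition qubit (x y z : R) : 'M[C]_2 :=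
  (2%:R)^-1 *: (1%:M + x%:C *: sigma1 + y%:C *: sigma2 + z%:C *: sigma3).

Definition eigdec n (rho U : 'M[C]_n) (lam : 'rV[R]_n) : Prop :=
  is_unitary U /\ rho = U *m rdiag lam *m adj U.

(* m_f(L_rho, R_rho)^{-1}(X): in the eigenbasis, divide entry (i,j) by m_f(l_i,l_j) *)
Definition mf_inv (f : R -> R) n (U : 'M[C]_n) (lam : 'rV[R]_n) (X : 'M[C]_n) : 'M[C]_n :=
  let Y := adj U *m X *m U in
  U *m (\matrix_(i, j) (Y i j / (mmean f (lam 0 i) (lam 0 j))%:C)) *m adj U.

Definition sqnorm (f : R -> R) n (U : 'M[C]_n) (lam : 'rV[R]_n) (X : 'M[C]_n) : C :=
  \tr (adj X *m mf_inv f U lam X).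

Definition finfo (f : R -> R) (f0 : R) n (rho U : 'M[C]_n) (lam : 'rV[R]_n)
    (A : 'M[C]_n) : C :=
  (f0 / 2)%:C * sqnorm f U lam ('i *: (rho *m A - A *m rho)).

Definition ISLD n (rho U : 'M[C]_n) (lam : 'rV[R]_n) (A : 'M[C]_n) : C :=
  finfo fSLD (1 / 2) rho U lam A.

End QDefs.

(* Main.v *)
Require Import Defs.
From HB Require Import structures.
From mathcomp Require Import all_boot all_order all_algebra.
From mathcomp Require Import all_classical all_reals all_analysis.
From mathcomp Require Import complex.
From mathcomp Require Import ring lra.
Import Order.TTheory GRing.Theory Num.Theory.
Import numFieldNormedType.Exports.
Local Open Scope ring_scope.
Local Open Scope complex_scope.
Section S.
Variable R : realType.
Local Notation C := R[i].
Lemma adjE n m (M : 'M[C]_(n,m)) i j : adj M i j = (M j i)^*.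
Proof. by rewrite !mxE. Qed.
Lemma adjM n m p (M : 'M[C]_(n,m)) (N : 'M[C]_(m,p)) : adj (M *m N) = adj N *m adj M.
Proof. by rewrite /adj map_mxM trmx_mul. Qed.
Lemma adjB n m (M N : 'M[C]_(n,m)) : adj (M - N) = adj M - adj N.
Proof. by apply/matrixP=> i j; rewrite !mxE rmorphB. Qed.
Lemma adjZ n m a (M : 'M[C]_(n,m)) : adj (a *: M) = a^* *: adj M.
Proof. by apply/matrixP=> i j; rewrite !mxE rmorphM. Qed.
Lemma adj_rdiag n (d : 'rV[R]_n) : adj (rdiag d) = rdiag d.
Proof. apply/matrixP=> i j; rewrite !mxE eq_sym; case: eqP => [->|_]; rewrite ?mulr1n ?mulr0n ?conjc_real //; apply/eqP; rewrite eq_complex /= oppr0 !eqxx. Qed.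
Lemma conj_i : ('i : C)^* = - 'i.
Proof. by apply/eqP; rewrite eq_complex /= oppr0 !eqxx. Qed.

Lemma adjK n m (M : 'M[C]_(n,m)) : adj (adj M) = M.
Proof. by apply/matrixP=> i j; rewrite !mxE conjcK. Qed.

Lemma sum2 (V : nmodType) (F : 'I_2 -> V) : \sum_(i<2) F i = F 0 + F 1.
Proof. rewrite big_ord_recl big_ord1; congr (_ + F _); exact/val_inj. Qed.

Lemma invC_D (a b : R) : (a^-1 + b^-1)%:C = (a%:C)^-1 + (b%:C)^-1 :> C.
Proof. by rewrite rmorphD !fmorphV. Qed.

Lemma alg (g a b c d l0 l1 b00 b01 b10 b11 : C) :
  2 *
  (g *
   (-1 *
    ((l0 * b00 - b00 * l0) * ((l0 * b00 - b00 * l0) / a) +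
     (l0 * b01 - b01 * l1) * ((l1 * b10 - b10 * l0) / c) +
     ((l1 * b10 - b10 * l0) * ((l0 * b01 - b01 * l1) / d) +
      (l1 * b11 - b11 * l1) * ((l1 * b11 - b11 * l1) / b))))) =
  - g *
  ((l0 * b00 - b00 * l0) * (l0 * b00 - b00 * l0) +
   (l0 * b01 - b01 * l1) * (l1 * b10 - b10 * l0) +
   ((l1 * b10 - b10 * l0) * (l0 * b01 - b01 * l1) +
    (l1 * b11 - b11 * l1) * (l1 * b11 - b11 * l1))) *
  (c^-1 + d^-1).
Proof. ring. Qed.

Lemma finfo_gen f f0 (rho U : 'M[C]_2) lam A :
  is_hermitian A -> eigdec rho U lam ->
  2 * finfo f f0 rho U lam A =
  - (f0/2)%:C * \tr ((rho *m A - A *m rho) *m (rho *m A - A *m rho)) *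
    ((mmean f (lam 0 1) (lam 0 0))^-1 + (mmean f (lam 0 0) (lam 0 1))^-1)%:C.
Proof.
move=> hA [hU ->].
set V := adj U. have VU : V *m U = 1%:M := hU.
have UV : U *m V = 1%:M by apply: mulmx1C.
set D := rdiag lam. set B := V *m A *m U.
set K := U *m D *m V *m A - A *m (U *m D *m V).
set W := D *m B - B *m D.
have hK : K = U *m W *m V.
  rewrite /K /W /B mulmxBr mulmxBl; congr (_ - _).
    by rewrite !mulmxA -(mulmxA _ U V) UV mulmx1.
  by rewrite !mulmxA UV mul1mx.
have hrho : adj (U *m D *m V) = U *m D *m V.
  by rewrite !adjM adjK adj_rdiag mulmxA.
have hX : adj ('i *: K) = 'i *: K.
  rewrite adjZ conjCi /K adjB (adjM _ _ _ (U *m D *m V)) (adjM _ _ _ A) hrho hA scaleNr -scalerN opprB.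
  by rewrite mulmxA.
have hY : V *m ('i *: K) *m U = 'i *: W.
  by rewrite hK -scalemxAr -scalemxAl !mulmxA VU mul1mx -mulmxA VU mulmx1.
rewrite /finfo /sqnorm /mf_inv -/K -/V hX hY.
set N := \matrix_(i, j) (W i j / (mmean f (lam 0 i) (lam 0 j))%:C).
have hN : \matrix_(i, j) (('i *: W) i j / (mmean f (lam 0 i) (lam 0 j))%:C) = 'i *: N.
  by apply/matrixP=> i j; rewrite !mxE mulrA.
rewrite hN.
have hT : \tr ('i *: K *m (U *m ('i *: N) *m V)) = 'i * 'i * \tr (W *m N).
  rewrite hK -scalemxAl -!scalemxAr -scalemxAl !mxtraceZ -scalemxAr mxtraceZ mulrA.
  by rewrite !mulmxA -(mulmxA _ V U) VU mulmx1 mxtrace_mulC !mulmxA VU mul1mx.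
have hKK : \tr (K *m K) = \tr (W *m W).
  by rewrite hK !mulmxA -(mulmxA _ V U) VU mulmx1 mxtrace_mulC !mulmxA VU mul1mx.
rewrite hT hKK -expr2 sqrCi.
clearbody B.
rewrite /N /W /D /rdiag mul_diag_mx mul_mx_diag /mxtrace !sum2 !mxE !sum2 !mxE.
rewrite invC_D.
move: ((mmean f (lam 0 0) (lam 0 0))%:C) ((mmean f (lam 0 1) (lam 0 1))%:C) ((mmean f (lam 0 1) (lam 0 0))%:C) ((mmean f (lam 0 0) (lam 0 1))%:C) => a b c d.
move: ((lam 0 0)%:C) ((lam 0 1)%:C) ((f0/2)%:C) => l0 l1 g.
move: (B 0 0) (B 0 1) (B 1 0) (B 1 1) => b00 b01 b10 b11.
exact: alg.
Qed.

Lemma tr_qubit (x y z : R) : \tr (qubit x y z) = 1.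
Proof.
rewrite /qubit /mxtrace !sum2 !mxE /=.
by field.
Qed.
Lemma tr_qubit2 (x y z : R) : \tr (qubit x y z *m qubit x y z) = (1 + (x%:C^+2 + y%:C^+2 + z%:C^+2)) / 2.
Proof.
rewrite /qubit /mxtrace !sum2 !mxE !sum2 !mxE /=.
rewrite (_ : (Num.imaginary : C) = 'i%C) //.
have hj : ('i%C : C) * 'i%C = -1 by rewrite -expr2 sqr_i.
move: ('i%C : C) hj (x%:C) (y%:C) (z%:C) => j hj a b c.
apply/eqP; rewrite -subr_eq0; apply/eqP.
transitivity (- (b^+2/2) * (j * j + 1)); last by rewrite hj addNr mulr0.
by field.
Qed.
Lemma rC_eq (x y z : R) : ((1 + (x^+2 + y^+2 + z^+2)) / 2)%:C = (1 + (x%:C^+2 + y%:C^+2 + z%:C^+2)) / 2 :> C.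
Proof. by rewrite rmorphM fmorphV !rmorphD !rmorphXn rmorph1. Qed.

Lemma tr_rdiag (d : 'rV[R]_2) : \tr (rdiag d) = (d 0 0 + d 0 1)%:C.
Proof. by rewrite /rdiag mxtrace_diag sum2 !mxE rmorphD. Qed.

Lemma eig_tr (rho U : 'M[C]_2) lam : eigdec rho U lam ->
  \tr rho = (lam 0 0 + lam 0 1)%:C /\ \tr (rho *m rho) = (lam 0 0 ^+ 2 + lam 0 1 ^+ 2)%:C.
Proof.
move=> [hU ->]; have VU : adj U *m U = 1%:M := hU.
split.
  by rewrite mxtrace_mulC mulmxA VU mul1mx tr_rdiag.
rewrite !mulmxA -(mulmxA _ (adj U) U) VU mulmx1 mxtrace_mulC !mulmxA VU mul1mx.
rewrite /rdiag mul_diag_mx /mxtrace sum2 !mxE /= !mulr1n rmorphD !rmorphXn /= !expr2.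
done.
Qed.

Lemma eig_vals (x y z : R) U lam :
  eigdec (qubit x y z) U lam ->
  let r := Num.sqrt (x ^+ 2 + y ^+ 2 + z ^+ 2) in
  (lam 0 0 = (1 + r) / 2 /\ lam 0 1 = (1 - r) / 2) \/
  (lam 0 0 = (1 - r) / 2 /\ lam 0 1 = (1 + r) / 2).
Proof.
move=> he r; have [t1 t2] := eig_tr _ _ _ he.
rewrite tr_qubit in t1; rewrite tr_qubit2 -rC_eq in t2.
have s1 : lam 0 0 + lam 0 1 = 1 by apply: complexI; rewrite -t1.
have s2 : lam 0 0 ^+ 2 + lam 0 1 ^+ 2 = (1 + (x ^+ 2 + y ^+ 2 + z ^+ 2)) / 2.
  by apply: complexI; rewrite -t2.
have hr : r ^+ 2 = x ^+ 2 + y ^+ 2 + z ^+ 2.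
  by rewrite sqr_sqrtr // !addr_ge0 // sqr_ge0.
rewrite -hr in s2.
move: (lam 0 0) (lam 0 1) s1 s2 => l0 l1 s1 s2.
have l1e : l1 = 1 - l0 by rewrite -s1 addrC addKr.
rewrite l1e in s2 *.
have : (2 * l0 - 1 - r) * (2 * l0 - 1 + r) = 0.
  have -> : (2 * l0 - 1 - r) * (2 * l0 - 1 + r) = 2 * (l0 ^+ 2 + (1 - l0) ^+ 2) - 1 - r ^+ 2 by ring.
  by rewrite s2; field.
move/eqP; rewrite mulf_eq0 => /orP [] /eqP h.
  by left; split; lra.
by right; split; lra.
Qed.

Lemma rCM (a b : R) : (a * b)%:C = a%:C * b%:C :> C.
Proof. exact: rmorphM. Qed.

Lemma fin_lem (T : C) (p q u v w : R) : p * q = u * v * w ->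
  - p%:C * T * q%:C = u%:C * (- v%:C * T * w%:C).
Proof.
move=> h; have : (p * q)%:C = (u * v * w)%:C :> C by rewrite h.
rewrite !rCM => h'.
transitivity (- T * (p%:C * q%:C)); first by ring.
by rewrite h'; ring.
Qed.
End S.

Theorem mainTheorem9 (R : realType) (x y z : R) (A : 'M[R[i]]_2)
    (f : R -> R) (f0 : R) (U1 U2 : 'M[R[i]]_2) (lam1 lam2 : 'rV[R]_2) :
  let r := Num.Def.sqrtr (x ^+ 2 + y ^+ 2 + z ^+ 2) in
  let rho := qubit x y z in
  0 < r -> r < 1 ->
  is_hermitian A ->
  Fop f ->
  (f t @[t --> 0^'+] --> f0)%classic ->
  f0 != 0 ->
  eigdec rho U1 lam1 ->
  eigdec rho U2 lam2 ->
  ISLD rho U1 lam1 A =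
    real_complex R (r ^+ 2 / (1 - mmean (ftilde f f0) (1 - r) (1 + r))) * finfo f f0 rho U2 lam2 A.
Proof.
move=> r rho hr0 hr1 hA hF _ hf0 he1 he2.
have [fpos _ f1 fsym] := hF.
have ev1 := @eig_vals R x y z U1 lam1 he1.
have ev2 := @eig_vals R x y z U2 lam2 he2.
rewrite -/r in ev1 ev2.
set a := (1 - r) / 2 in ev1 ev2 *; set b := (1 + r) / 2 in ev1 ev2 *.
have nz : forall t : R, 0 < t -> t != 0 by move=> t ht; exact: lt0r_neq0.
have ha : 0 < a by rewrite /a; lra.
have hb : 0 < b by rewrite /b; lra.
have msym : forall u v, 0 < u -> 0 < v -> mmean f v u = mmean f u v.
  move=> u v hu hv; rewrite /mmean.
  have := fsym (v / u) (divr_gt0 hv hu); rewrite invf_div => h.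
  rewrite -h; field; exact: lt0r_neq0.
have hS2 : (mmean f (lam2 0 1) (lam2 0 0))^-1 + (mmean f (lam2 0 0) (lam2 0 1))^-1
    = 2 / mmean f a b.
  case: ev2 => [[-> ->]|[-> ->]]; rewrite -/a -/b ?(msym a b ha hb); by rewrite mulr_natl mulr2n.
have hS1 : (mmean (@fSLD R) (lam1 0 1) (lam1 0 0))^-1 + (mmean (@fSLD R) (lam1 0 0) (lam1 0 1))^-1
    = 4.
  case: ev1 => [[-> ->]|[-> ->]]; rewrite /mmean /fSLD /a /b; field.
  all: repeat (apply/andP; split). all: try (apply: nz; lra).
have hF0 : 0 < f ((1 + r) / (1 - r)) by apply: fpos; apply: divr_gt0; lra.
set F := f ((1 + r) / (1 - r)) in hF0.
have hba : b / a = (1 + r) / (1 - r) by rewrite /a /b; field; lra.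
have h1 : 1 - mmean (ftilde f f0) (1 - r) (1 + r) = 2 * r ^+ 2 * f0 / ((1 - r) * F).
  rewrite /mmean /ftilde -/F; field; repeat (apply/andP; split); try (apply: nz; lra).
have hc : r ^+ 2 / (1 - mmean (ftilde f f0) (1 - r) (1 + r)) = mmean f a b / f0.
  rewrite h1 /mmean hba -/F /a; field; repeat (apply/andP; split); try (apply: nz; lra); try exact: hf0.
have two0 : (2 : R[i]) != 0 by rewrite pnatr_eq0.
set LHS := ISLD _ _ _ _. set RHS := _ * finfo _ _ _ _ _ _.
suff key : 2 * LHS = 2 * RHS by exact: (mulfI two0 key).
rewrite /LHS /ISLD (@finfo_gen R (@fSLD R) (1/2) rho U1 lam1 A hA he1).
rewrite /RHS (mulrCA 2 _ (finfo _ _ _ _ _ _)) (@finfo_gen R f f0 rho U2 lam2 A hA he2).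
rewrite hS1 hS2 hc; apply: fin_lem.
field; apply/andP; split; last exact: hf0.
apply: nz; rewrite /mmean; apply: mulr_gt0 => //; apply: fpos; exact: divr_gt0.
Qed.
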